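(* Let $I\times J$ be a dyadic square and let $\Phi(x_1,\ldots,x_m,y_1,\ldots,y_n)$ be a bounded measurable function. For a dyadic square $I'\times J'$ put $\mathcal{B}_{I'\times J'}:=\big[\Phi(x_1,\ldots,x_m,y_1,\ldots,y_n)\big]_{x_1,\ldots,x_m\in I',\,y_1,\ldots,y_n\in J'}$. Then $$\Box\mathcal{B}_{I\times J}=\sum_{\substack{S\subseteq\{1,\ldots,m\},\ T\subseteq\{1,\ldots,n\}\\ |S|,|T|\ \text{even},\ (S,T)\neq(\emptyset,\emptyset)}}\Big[\big\langle\Phi(x_1,\ldots,x_m,y_1,\ldots,y_n)\big\rangle_{x_i\in I\ (i\in S),\ y_j\in J\ (j\in T)}\Big]_{x_i\in I\ (i\notin S),\ y_j\in J\ (j\notin T)} .$$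
   Context: For a dyadic interval $I$ with left half $I_l$ and right half $I_r$ and an integrable $f$, write $[f(x)]_{x\in I}:=\frac{1}{|I|}\int_I f(x)\,dx$ and $\langle f(x)\rangle_{x\in I}:=\frac{1}{|I|}\big(\int_{I_l}f(x)\,dx-\int_{I_r}f(x)\,dx\big)$. Brackets with several subscripted variables denote the corresponding iterated averages in each variable (the order is irrelevant). For a quantity $\mathcal{B}$ defined for every dyadic square, its first order difference is $\Box\mathcal{B}_{I\times J}:=\frac14\big(\mathcal{B}_{I_l\times J_l}+\mathcal{B}_{I_l\times J_r}+\mathcal{B}_{I_r\times J_l}+\mathcal{B}_{I_r\times J_r}\big)-\mathcal{B}_{I\times J}$. *)

(* Defs.v *)
From HB Require Import structures.
From mathcomp Require Import all_boot all_order all_algebra.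
From mathcomp Require Import all_classical all_reals all_analysis.
Set Implicit Arguments. Unset Strict Implicit. Unset Printing Implicit Defensive.
Import Order.TTheory GRing.Theory Num.Theory.
Local Open Scope classical_set_scope.
Local Open Scope ring_scope.

Section Dyadic.
Variable R : realType.

Definition dyad (j k : int) : set R :=
  `[k%:~R * (2:R) ^ (- j), (k + 1)%:~R * (2:R) ^ (- j)[%classic.

Definition dlen (j : int) : R := (2:R) ^ (- j).

Definition intI (D : set R) (f : R -> R) : R :=
  Rintegral (@lebesgue_measure R) D f.

Definition upd (p : nat) (x : 'I_p -> R) (i : 'I_p) (t : R) : 'I_p -> R :=
  fun k => if k == i then t else x k.

Variables m n : nat.
Notation Fn := (('I_m -> R) -> ('I_n -> R) -> R).

Definition avgx (i : 'I_m) (j k : int) (F : Fn) : Fn :=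
  fun x y => (dlen j)^-1 * intI (dyad j k) (fun t => F (upd x i t) y).
Definition avgy (i : 'I_n) (j k : int) (F : Fn) : Fn :=
  fun x y => (dlen j)^-1 * intI (dyad j k) (fun t => F x (upd y i t)).
Definition haarx (i : 'I_m) (j k : int) (F : Fn) : Fn :=
  fun x y => (dlen j)^-1 *
    (intI (dyad (j + 1) (2 * k)) (fun t => F (upd x i t) y)
     - intI (dyad (j + 1) (2 * k + 1)) (fun t => F (upd x i t) y)).
Definition haary (i : 'I_n) (j k : int) (F : Fn) : Fn :=
  fun x y => (dlen j)^-1 *
    (intI (dyad (j + 1) (2 * k)) (fun t => F x (upd y i t))
     - intI (dyad (j + 1) (2 * k + 1)) (fun t => F x (upd y i t))).

(* All variables
   are integrated out, so the result is evaluated at an arbitrary point (0). *)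
Definition mixed (S : {set 'I_m}) (T : {set 'I_n}) (jI kI jJ kJ : int) (F : Fn) : R :=
  let G := foldr (fun i G => if i \in S then haarx i jI kI G else avgx i jI kI G)
             F (enum 'I_m) in
  let H := foldr (fun i G => if i \in T then haary i jJ kJ G else avgy i jJ kJ G)
             G (enum 'I_n) in
  H (fun _ => 0) (fun _ => 0).

Definition Bsq (F : Fn) (j k1 k2 : int) : R := mixed finset.set0 finset.set0 j k1 j k2 F.

Definition BoxB (F : Fn) (j k1 k2 : int) : R :=
  4^-1 * (Bsq F (j + 1) (2 * k1) (2 * k2) + Bsq F (j + 1) (2 * k1) (2 * k2 + 1)
          + Bsq F (j + 1) (2 * k1 + 1) (2 * k2) + Bsq F (j + 1) (2 * k1 + 1) (2 * k2 + 1))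
  - Bsq F j k1 k2.

Definition open_boxes : set (set (('I_m -> R) * ('I_n -> R))) :=
  [set B | exists a b : 'I_m -> R, exists c d : 'I_n -> R,
     B = [set z | (forall i, a i < z.1 i < b i) /\ (forall i, c i < z.2 i < d i)]].

Definition borel_measurable (F : Fn) : Prop :=
  forall A : set R, measurable A ->
    <<s open_boxes >> ((fun z => F z.1 z.2) @^-1` A).

Definition bounded_fun2 (F : Fn) : Prop :=
  exists M : R, forall x y, `|F x y| <= M.

End Dyadic.

(* Main.v *)
Require Import Defs.
From HB Require Import structures.
From mathcomp Require Import all_boot all_order all_algebra.
From mathcomp Require Import all_classical all_reals all_analysis.
From mathcomp Require Import measurable_realfun.
From mathcomp Require Import ring lra.
Import Order.TTheory GRing.Theory Num.Theory.
Local Open Scope ring_scope.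

Module Helpers.
Set Implicit Arguments. Unset Strict Implicit. Unset Printing Implicit Defensive.
Local Open Scope classical_set_scope.

Definition UT (R : realType) m n := (('I_m -> R) * ('I_n -> R))%type.
HB.instance Definition _ (R : realType) m n := Choice.on (UT R m n).
HB.instance Definition _ (R : realType) m n := isPointed.Build (UT R m n) (fun=>0, fun=>0).
Definition GT (R : realType) m n := @g_sigma_algebraType (UT R m n) (@open_boxes R m n).

Section Ana.
Variables (R : realType) (m n : nat).
Notation Fn := (('I_m -> R) -> ('I_n -> R) -> R).
Notation G := (GT R m n).

Definition uF (F : Fn) : G -> R := fun z => F z.1 z.2.

Lemma bm_mf F : borel_measurable F -> measurable_fun setT (uF F).
Proof. by move=> hF _ A mA; rewrite setTI; exact: hF. Qed.

Lemma mf_bm F : measurable_fun setT (uF F) -> borel_measurable F.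
Proof. by move=> hF A mA; have := hF measurableT A mA; rewrite setTI. Qed.

Definition box (a b : 'I_m -> R) (c d : 'I_n -> R) : set G :=
  [set z | (forall i, a i < z.1 i < b i) /\ (forall i, c i < z.2 i < d i)].

Lemma box_meas a b c d : measurable (box a b c d).
Proof. by apply: sub_sigma_algebra; exists a, b, c, d. Qed.

Lemma bnd_ex (x : R) : exists N : nat, - N%:R < x < N%:R.
Proof.
exists (Num.Def.archi_bound `|x|); rewrite -ltr_norml.
exact: archi_boundP.
Qed.

Definition phix (i : 'I_m) : (G * R)%type -> G :=
  fun p => (upd p.1.1 i p.2, p.1.2).
Definition phiy (i : 'I_n) : (G * R)%type -> G :=
  fun p => (p.1.1, upd p.1.2 i p.2).

Lemma phix_meas i : measurable_fun setT (phix i).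
Proof.
apply: (@measurability _ _ _ G setT _ (@open_boxes R m n)); first by [].
rewrite /preimage_set_system.
move=> _ [B [a [b [c [d ->]]]] <-].
set B' := [set z : G | (forall k, k != i -> a k < z.1 k < b k) /\
                        (forall k, c k < z.2 k < d k)].
have -> : setT `&` phix i @^-1` [set z | (forall i, a i < z.1 i < b i) /\
      (forall i, c i < z.2 i < d i)] = B' `*` `]a i, b i[%classic.
  apply/seteqP; split.
    move=> [w t] [_ /= [h1 h2]]; split; last first.
      by have := h1 i; rewrite /upd eqxx /= in_itv /=.
    split=> // k kni; have := h1 k; by rewrite /upd (negbTE kni).
  move=> [w t] [[h1 h2]]; rewrite /= in_itv /= => hi; split=> //; split=> //.
  by move=> k; rewrite /upd; case: eqP => [->|/eqP kni] //; exact: h1.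
apply: measurableX; last exact: measurable_itv.
have -> : B' = \bigcup_N box (fun k => if k == i then - N%:R else a k)
                            (fun k => if k == i then N%:R else b k) c d.
  apply/seteqP; split.
    move=> z [h1 h2]; have [N hN] := bnd_ex (z.1 i).
    exists N => //; split=> // k; case: eqP => [->//|/eqP kni]; exact: h1.
  move=> z [N _ [h1 h2]]; split=> // k kni.
  by have := h1 k; rewrite (negbTE kni).
by apply: bigcupT_measurable => N; exact: box_meas.
Qed.

Lemma phiy_meas i : measurable_fun setT (phiy i).
Proof.
apply: (@measurability _ _ _ G setT _ (@open_boxes R m n)); first by [].
rewrite /preimage_set_system.
move=> _ [B [a [b [c [d ->]]]] <-].
set B' := [set z : G | (forall k, a k < z.1 k < b k) /\
                        (forall k, k != i -> c k < z.2 k < d k)].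
have -> : setT `&` phiy i @^-1` [set z | (forall i, a i < z.1 i < b i) /\
      (forall i, c i < z.2 i < d i)] = B' `*` `]c i, d i[%classic.
  apply/seteqP; split.
    move=> [w t] [_ /= [h1 h2]]; split; last first.
      by have := h2 i; rewrite /upd eqxx /= in_itv /=.
    split=> // k kni; have := h2 k; by rewrite /upd (negbTE kni).
  move=> [w t] [[h1 h2]]; rewrite /= in_itv /= => hi; split=> //; split=> //.
  by move=> k; rewrite /upd; case: eqP => [->|/eqP kni] //; exact: h2.
apply: measurableX; last exact: measurable_itv.
have -> : B' = \bigcup_N box a b (fun k => if k == i then - N%:R else c k)
                            (fun k => if k == i then N%:R else d k).
  apply/seteqP; split.
    move=> z [h1 h2]; have [N hN] := bnd_ex (z.2 i).
    exists N => //; split=> // k; case: eqP => [->//|/eqP kni]; exact: h2.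
  move=> z [N _ [h1 h2]]; split=> // k kni.
  by have := h2 k; rewrite (negbTE kni).
by apply: bigcupT_measurable => N; exact: box_meas.
Qed.


Definition good (F : Fn) := borel_measurable F /\ bounded_fun2 F.
Definition fadd (F G : Fn) : Fn := fun x y => F x y + G x y.
Definition fscale (c : R) (F : Fn) : Fn := fun x y => c * F x y.
Definition fzero : Fn := fun _ _ => 0.

Lemma bnd_of (T : Type) (A : set T) (f : T -> R) M :
  (forall x, `|f x| <= M) -> [bounded f x | x in A].
Proof.
move=> hM; exists M; split; first exact: num_real.
by move=> M' hM' x _; exact: le_trans (hM x) (ltW hM').
Qed.

Lemma good_add F G : good F -> good G -> good (fadd F G).
Proof.
move=> [mF [M1 h1]] [mG [M2 h2]]; split.
  by apply: mf_bm; apply: measurable_realfun.measurable_funD; exact: bm_mf.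
exists (M1 + M2) => x y; apply: le_trans (ler_normD _ _) _; exact: lerD.
Qed.

Lemma good_scale c F : good F -> good (fscale c F).
Proof.
move=> [mF [M h]]; split.
  apply: mf_bm; apply: (measurable_realfun.measurable_funM (f := cst c)).
    exact: measurable_cst.
  exact: bm_mf.
exists (`|c| * M) => x y; rewrite normrM; apply: ler_wpM2l => //.
Qed.

Lemma good0 : good fzero.
Proof.
split; first by apply: mf_bm; exact: measurable_cst.
by exists 0 => x y; rewrite normr0.
Qed.

Notation leb := (@lebesgue_measure R).

Section Core.
Variable (phi : (G * R)%type -> G) (hphi : measurable_fun setT phi).

Definition sec (F : Fn) (z : G) : R -> R := fun t => uF F (phi (z, t)).
Definition Iphi (D : set R) (F : Fn) : G -> R := fun z => intI D (sec F z).

Lemma sec_meas F z : borel_measurable F -> measurable_fun setT (sec F z).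
Proof.
move=> hF; have h := (measurableT_comp (bm_mf hF) (measurable_fun_pair2 (f:=phi) z hphi)).
exact h.
Qed.

Lemma sec_int D F z : measurable D -> (leb D < +oo)%E -> good F ->
  leb.-integrable D (EFin \o sec F z).
Proof.
move=> mD fD [hF [M hM]]; apply: measurable_bounded_integrable => //.
  exact: measurable_funS (sec_meas z hF).
by apply: (@bnd_of _ _ _ M) => t; exact: hM.
Qed.

Lemma Iphi_meas D F : measurable D -> good F -> measurable_fun setT (Iphi D F).
Proof.
move=> mD [hF _].
pose g : (G * R)%type -> \bar R :=
  EFin \o ((uF F \o phi) \* (\1_D \o snd)).
have mg : measurable_fun [set: (G * R)%type] g.
  apply/measurable_realfun.measurable_EFinP.
  apply: measurable_realfun.measurable_funM.
    exact: measurableT_comp (bm_mf hF) hphi.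
  by apply: measurableT_comp; [exact: measurable_realfun.measurable_indic|exact: measurable_snd].
have -> : Iphi D F = fine \o (fun z => fubini_F leb g^\+ z - fubini_F leb g^\- z)%E.
  apply/funext => z; rewrite /Iphi /intI /Rintegral /=; congr fine.
  rewrite integral_mkcond integralE; congr (_ - _)%E.
    apply: eq_integral => t _; rewrite epatch_indic /g /=.
    by rewrite !funeposE.
  apply: eq_integral => t _; rewrite epatch_indic /g /=.
  by rewrite !funenegE.
apply: measurableT_comp; first exact: measurable_realfun.fine_measurable.
apply: emeasurable_funB.
  apply: measurable_fun_fubini_tonelli_F; last exact: funepos_ge0.
  exact: measurable_realfun.measurable_funepos.
apply: measurable_fun_fubini_tonelli_F; last exact: funeneg_ge0.
exact: measurable_realfun.measurable_funeneg.
Qed.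

Lemma Iphi_bnd D F : measurable D -> (leb D < +oo)%E -> good F ->
  exists M, forall z, `|Iphi D F z| <= M.
Proof.
move=> mD fD gF; have [hF [M hM]] := gF.
exists (M * fine (leb D)) => z.
rewrite /Iphi /intI; apply: le_trans (le_normr_Rintegral mD (sec_int z mD fD gF)) _.
rewrite -Rintegral_cst //; apply: le_Rintegral => //.
- apply: measurable_bounded_integrable => //.
    apply: measurableT_comp; first exact: normr_measurable.
    exact: measurable_funS (sec_meas z hF).
  by apply: (@bnd_of _ _ _ M) => t; rewrite normr_id; exact: hM.
- apply: measurable_bounded_integrable => //.
  by apply: (@bnd_of _ _ _ `|M|) => t.
- by move=> t _; exact: hM.
Qed.

End Core.
End Ana.

Section Dy.
Variable R : realType.

Lemma dlenS (j : int) : dlen R j = 2 * dlen R (j + 1).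
Proof.
rewrite /dlen (_ : - j = - (j + 1) + 1); last by rewrite opprD addrNK.
by rewrite expfzDr ?expr1z 1?mulrC // pnatr_eq0.
Qed.

Lemma itv_eq (a b a' b' : R) : a = a' -> b = b' -> `[a, b[%classic = `[a', b'[%classic.
Proof. by move=> -> ->. Qed.

Lemma dlen_gt0 j : 0 < dlen R j.
Proof. by apply: exprz_gt0. Qed.

Lemma dyadE j k : @dyad R j k = `[k%:~R * dlen R j, (k%:~R + 1) * dlen R j[%classic.
Proof. by rewrite /dyad intrD. Qed.

Lemma dyadL j k : @dyad R (j + 1) (2 * k) =
  `[k%:~R * dlen R j, (k%:~R + 2^-1) * dlen R j[%classic.
Proof.
rewrite /dyad intrD intrM dlenS -/(dlen R (j+1)).
by apply: itv_eq; field.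
Qed.

Lemma dyadR j k : @dyad R (j + 1) (2 * k + 1) =
  `[(k%:~R + 2^-1) * dlen R j, (k%:~R + 1) * dlen R j[%classic.
Proof.
rewrite /dyad !intrD intrM dlenS -/(dlen R (j+1)).
by apply: itv_eq; field.
Qed.

Lemma itv_split (a c b : R) : a <= c -> c <= b ->
  `[a, b[%classic = `[a, c[%classic `|` `[c, b[%classic.
Proof.
move=> ac cb; apply/seteqP; split => x /=; rewrite !in_itv /=.
  move=> /andP[ax xb]; case: (ltP x c) => xc; [left|right]; apply/andP; split=> //.
move=> [] /andP[h1 h2]; apply/andP; split.
- by [].
- exact: lt_le_trans h2 cb.
- exact: le_trans ac h1.
- by [].
Qed.

Lemma itv_disj (a c b : R) : [disjoint `[a, c[%classic & `[c, b[%classic].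
Proof.
apply/disj_set2P; apply/seteqP; split => // x /=; rewrite !in_itv /=.
by move=> [/andP[_ h1] /andP[h2 _]]; move: (lt_le_trans h1 h2); rewrite ltxx.
Qed.

Lemma dyad_split j k : @dyad R j k = @dyad R (j + 1) (2 * k) `|` @dyad R (j + 1) (2 * k + 1).
Proof.
rewrite dyadE dyadL dyadR; have h := dlen_gt0 j.
by apply: itv_split; rewrite ler_pM2r //; lra.
Qed.

Lemma dyad_disj j k : [disjoint @dyad R (j + 1) (2 * k) & @dyad R (j + 1) (2 * k + 1)].
Proof. rewrite dyadL dyadR; exact: itv_disj. Qed.

Lemma dyad_meas j k : measurable (@dyad R j k).
Proof. exact: measurable_itv. Qed.

Lemma dyad_fin j k : (@lebesgue_measure R (@dyad R j k) < +oo)%E.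
Proof. by rewrite /dyad lebesgue_measure_itv; case: ifP => _; rewrite ltry. Qed.

End Dy.

Section Ops.
Variables (R : realType) (m n : nat).
Notation Fn := (('I_m -> R) -> ('I_n -> R) -> R).

Definition ix (i : 'I_m) (D : set R) (F : Fn) : Fn :=
  fun x y => intI D (fun t => F (upd x i t) y).
Definition iy (i : 'I_n) (D : set R) (F : Fn) : Fn :=
  fun x y => intI D (fun t => F x (upd y i t)).

Lemma good_ix i j k F : good F -> good (ix i (@dyad R j k) F).
Proof.
move=> gF; have [M hM] := Iphi_bnd (phix_meas i) (@dyad_meas R j k) (dyad_fin R j k) gF.
split; last by exists M => x y; exact: (hM (x, y)).
exact: mf_bm (Iphi_meas (phix_meas i) (@dyad_meas R j k) gF).
Qed.

Lemma good_iy i j k F : good F -> good (iy i (@dyad R j k) F).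
Proof.
move=> gF; have [M hM] := Iphi_bnd (phiy_meas i) (@dyad_meas R j k) (dyad_fin R j k) gF.
split; last by exists M => x y; exact: (hM (x, y)).
exact: mf_bm (Iphi_meas (phiy_meas i) (@dyad_meas R j k) gF).
Qed.

Lemma ix_add i j k F G x y : good F -> good G ->
  ix i (@dyad R j k) (fadd F G) x y = ix i (@dyad R j k) F x y + ix i (@dyad R j k) G x y.
Proof.
move=> gF gG.
rewrite /ix /intI /fadd; apply: RintegralD.
- exact: dyad_meas.
- exact: (sec_int (phix_meas i) (x, y) (@dyad_meas R j k) (dyad_fin R j k) gF).
- exact: (sec_int (phix_meas i) (x, y) (@dyad_meas R j k) (dyad_fin R j k) gG).
Qed.

Lemma iy_add i j k F G x y : good F -> good G ->
  iy i (@dyad R j k) (fadd F G) x y = iy i (@dyad R j k) F x y + iy i (@dyad R j k) G x y.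
Proof.
move=> gF gG.
rewrite /iy /intI /fadd; apply: RintegralD.
- exact: dyad_meas.
- exact: (sec_int (phiy_meas i) (x, y) (@dyad_meas R j k) (dyad_fin R j k) gF).
- exact: (sec_int (phiy_meas i) (x, y) (@dyad_meas R j k) (dyad_fin R j k) gG).
Qed.

Lemma ix_scale i j k c F x y : good F ->
  ix i (@dyad R j k) (fscale c F) x y = c * ix i (@dyad R j k) F x y.
Proof.
move=> gF.
rewrite /ix /intI /fscale; apply: RintegralZl.
- exact: dyad_meas.
- exact: (sec_int (phix_meas i) (x, y) (@dyad_meas R j k) (dyad_fin R j k) gF).
Qed.

Lemma iy_scale i j k c F x y : good F ->
  iy i (@dyad R j k) (fscale c F) x y = c * iy i (@dyad R j k) F x y.
Proof.
move=> gF.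
rewrite /iy /intI /fscale; apply: RintegralZl.
- exact: dyad_meas.
- exact: (sec_int (phiy_meas i) (x, y) (@dyad_meas R j k) (dyad_fin R j k) gF).
Qed.

Lemma ix_split i j k F x y : good F ->
  ix i (@dyad R j k) F x y =
  ix i (@dyad R (j + 1) (2 * k)) F x y + ix i (@dyad R (j + 1) (2 * k + 1)) F x y.
Proof.
move=> gF; rewrite /ix {1}(dyad_split R j k).
apply: Rintegral_setU; [exact: dyad_meas|exact: dyad_meas| |exact: dyad_disj].
rewrite -dyad_split.
exact: (sec_int (phix_meas i) (x, y) (@dyad_meas R j k) (dyad_fin R j k) gF).
Qed.

Lemma iy_split i j k F x y : good F ->
  iy i (@dyad R j k) F x y =
  iy i (@dyad R (j + 1) (2 * k)) F x y + iy i (@dyad R (j + 1) (2 * k + 1)) F x y.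
Proof.
move=> gF; rewrite /iy {1}(dyad_split R j k).
apply: Rintegral_setU; [exact: dyad_meas|exact: dyad_meas| |exact: dyad_disj].
rewrite -dyad_split.
exact: (sec_int (phiy_meas i) (x, y) (@dyad_meas R j k) (dyad_fin R j k) gF).
Qed.

End Ops.

Local Close Scope classical_set_scope.

Section Gen.
Variables (R : realType) (X Y : Type) (I : finType).
Notation Fn := (X -> Y -> R).
Definition gadd (F G : Fn) : Fn := fun x y => F x y + G x y.
Definition gscale (c : R) (F : Fn) : Fn := fun x y => c * F x y.
Definition gzero : Fn := fun _ _ => 0.
Definition gsum (T : Type) (r : seq T) (P : pred T) (w : T -> R) (G : T -> Fn) : Fn :=
  fun x y => \sum_(t <- r | P t) w t * G t x y.

Variable good : Fn -> Prop.
Hypothesis goodD : forall F G, good F -> good G -> good (gadd F G).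
Hypothesis goodZ : forall c F, good F -> good (gscale c F).
Hypothesis good0 : good gzero.

Definition lin (O : Fn -> Fn) :=
  (forall F, good F -> good (O F)) /\
  (forall F G, good F -> good G -> O (gadd F G) = gadd (O F) (O G)) /\
  (forall c F, good F -> O (gscale c F) = gscale c (O F)).

Lemma gsum_good T r P w (G : T -> Fn) : (forall t, good (G t)) -> good (gsum r P w G).
Proof.
move=> hG; elim: r => [|t r IH].
  have -> : gsum [::] P w G = gzero by apply/funext=> x; apply/funext=> y; rewrite /gsum big_nil.
  by [].
case Pt: (P t).
  have -> : gsum (t :: r) P w G = gadd (gscale (w t) (G t)) (gsum r P w G).
    by apply/funext=> x; apply/funext=> y; rewrite /gsum big_cons Pt.
  by apply: goodD => //; apply: goodZ.
have -> : gsum (t :: r) P w G = gsum r P w G.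
  by apply/funext=> x; apply/funext=> y; rewrite /gsum big_cons Pt.
by [].
Qed.

Lemma lin0 O : lin O -> O gzero = gzero.
Proof.
move=> [g [_ hZ]].
have e : gzero = gscale 0 gzero by apply/funext=> x; apply/funext=> y; rewrite /gscale mul0r.
by rewrite {1}e hZ //; apply/funext=> x; apply/funext=> y; rewrite /gscale mul0r.
Qed.

Lemma lin_sum O T r P w (G : T -> Fn) : lin O -> (forall t, good (G t)) ->
  O (gsum r P w G) = gsum r P w (fun t => O (G t)).
Proof.
move=> hO hG; move: (hO) => [g [hD hZ]]; elim: r => [|t r IH].
  have -> : gsum [::] P w G = gzero by apply/funext=> x; apply/funext=> y; rewrite /gsum big_nil.
  by rewrite lin0 //; apply/funext=> x; apply/funext=> y; rewrite /gsum big_nil.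
case Pt: (P t).
  have -> : gsum (t :: r) P w G = gadd (gscale (w t) (G t)) (gsum r P w G).
    by apply/funext=> x; apply/funext=> y; rewrite /gsum big_cons Pt.
  rewrite hD ?hZ ?IH //; [|exact: goodZ|exact: gsum_good].
  by apply/funext=> x; apply/funext=> y; rewrite /gsum big_cons Pt.
have -> : gsum (t :: r) P w G = gsum r P w G.
  by apply/funext=> x; apply/funext=> y; rewrite /gsum big_cons Pt.
by rewrite IH; apply/funext=> x; apply/funext=> y; rewrite /gsum big_cons Pt.
Qed.

Variables (a h : I -> Fn -> Fn).
Hypothesis ha : forall i, lin (a i).
Hypothesis hh : forall i, lin (h i).

Definition Op (S : {set I}) (s : seq I) (F : Fn) : Fn :=
  foldr (fun i G => if i \in S then h i G else a i G) F s.

Lemma Op_good S s F : good F -> good (Op S s F).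
Proof.
move=> gF; elim: s => [|i s IH] //=.
by case: (i \in S); [move: (hh i) => [g _]|move: (ha i) => [g _]]; apply: g.
Qed.

Lemma Op_lin S s : lin (Op S s).
Proof.
split; first by move=> F; exact: Op_good.
split.
  move=> F G gF gG; elim: s => [|i s IH] //=.
  rewrite IH; case: (i \in S); [move: (hh i) => [_ [hD _]]|move: (ha i) => [_ [hD _]]];
    by apply: hD; apply: Op_good.
move=> c F gF; elim: s => [|i s IH] //=.
rewrite IH; case: (i \in S); [move: (hh i) => [_ [_ hZ]]|move: (ha i) => [_ [_ hZ]]];
  by apply: hZ; apply: Op_good.
Qed.

Lemma Op_ext (S S' : {set I}) (s : seq I) F : {in s, forall i, (i \in S) = (i \in S')} -> Op S s F = Op S' s F.
Proof.
elim: s => [|i s IH] //= hS.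
rewrite IH; last by move=> k ks; apply: hS; rewrite inE ks orbT.
by rewrite hS // inE eqxx.
Qed.

Definition expand (sg : R) (s : seq I) (F : Fn) : Fn :=
  foldr (fun i G => gadd (a i G) (gscale sg (h i G))) F s.

Lemma expand_good sg s F : good F -> good (expand sg s F).
Proof.
move=> gF; elim: s => [|i s IH] //=.
apply: goodD; first by move: (ha i) => [g _]; apply: g.
by apply: goodZ; move: (hh i) => [g _]; apply: g.
Qed.

Lemma expandE sg s F : uniq s -> good F ->
  expand sg s F = gsum (index_enum {set I}) (fun S => S \subset s)
                       (fun S => sg ^+ #|S|) (fun S => Op S s F).
Proof.
move=> us gF; elim: s us => [|b s IH] us.
  apply/funext=> x; apply/funext=> y; rewrite /gsum /=.
  rewrite (bigD1 finset.set0) /=; last by apply/fintype.subsetP => i; rewrite inE.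
  rewrite big1 ?cards0 ?expr0 ?mul1r ?addr0 // => S /andP[sS S0].
  by move: S0; rewrite -finset.subset0 => /negP; case; apply/fintype.subsetP => i iS; have := fintype.subsetP sS i iS.
move: us => /= /andP[bs us].
rewrite IH //.
have gO : forall S, good (Op S s F) by move=> S; exact: Op_good.
rewrite (lin_sum _ _ _ (ha b) gO) (lin_sum _ _ _ (hh b) gO).
apply/funext=> x; apply/funext=> y; rewrite /gadd /gscale /gsum.
rewrite [RHS](bigID (fun S : {set I} => b \in S)) /= addrC; congr (_ + _).
  apply: eq_big.
    move=> S /=; apply/idP/idP.
      move=> /fintype.subsetP sS; apply/andP; split.
        by apply/fintype.subsetP => i iS; have := sS i iS; rewrite !inE => ->; rewrite orbT.
      by apply/negP => bS; have := sS b bS; rewrite (negbTE bs).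
    move=> /andP[/fintype.subsetP sS bS]; apply/fintype.subsetP => i iS.
    have := sS i iS; rewrite !inE => /orP[/eqP ib|//].
    by move: bS; rewrite -ib iS.
  move=> S /fintype.subsetP sS.
  have bS : b \notin S by apply/negP => bS; have := sS b bS; rewrite (negbTE bs).
  by rewrite (negbTE bS).
rewrite mulr_sumr.
rewrite [RHS](reindex_onto (fun S => b |: S) (fun S => S :\ b)); last first.
  by move=> S /andP[_ bS]; rewrite finset.setD1K.
apply: eq_big.
  move=> S /=; apply/idP/idP.
    move=> /fintype.subsetP sS.
    have bS : b \notin S by apply/negP => bS; have := sS b bS; rewrite (negbTE bs).
    rewrite finset.setU1K // eqxx finset.setU11 !andbT /=.
    apply/fintype.subsetP => i; rewrite !inE => /orP[/eqP ->|iS]; first by rewrite eqxx.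
    by rewrite (sS i iS) orbT.
  move=> /andP[/andP[/fintype.subsetP sS _] /eqP eS].
  have bS : b \notin S by rewrite -eS finset.setD11.
  apply/fintype.subsetP => i iS; have := sS i; rewrite !inE iS orbT => /(_ isT) /orP[/eqP ib|//].
  by move: bS; rewrite -ib iS.
move=> S /fintype.subsetP sS.
have bS : b \notin S by apply/negP => bS; have := sS b bS; rewrite (negbTE bs).
rewrite /= finset.setU11 cardsU1 bS add1n exprS -mulrA; congr (_ * (_ * _)).
congr (h b _ x y); apply: Op_ext => i is_; rewrite !inE.
by case: eqP => // ib; move: bs; rewrite -ib is_.
Qed.

End Gen.

Section Gen2.
Variables (R : realType) (X Y : Type) (I : finType).
Notation Fn := (X -> Y -> R).
Variable good : Fn -> Prop.
Hypothesis goodD : forall F G, good F -> good G -> good (gadd F G).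
Hypothesis goodZ : forall c F, good F -> good (gscale c F).
Variables (a h l : I -> Fn -> Fn) (sg : R).
Hypothesis ha : forall i, lin good (a i).
Hypothesis hh : forall i, lin good (h i).
Hypothesis hl : forall i G, good G -> l i G = gadd (a i G) (gscale sg (h i G)).

Lemma foldr_l s F : good F -> foldr (fun i G => l i G) F s = expand a h sg s F.
Proof.
move=> gF; elim: s => [|i s IH] //=.
by rewrite IH hl //; apply: expand_good.
Qed.
End Gen2.

Section Ops2.
Variables (R : realType) (m n : nat).
Notation Fn := (('I_m -> R) -> ('I_n -> R) -> R).

Lemma dlen_neq0 j : dlen R j != 0.
Proof. by rewrite gt_eqF // dlen_gt0. Qed.

Lemma lin_avgx i j k : lin (@good R m n) (@avgx R m n i j k).
Proof.
split; first by move=> F gF; exact: good_scale (good_ix i j k gF).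
split.
  move=> F G gF gG; apply/funext=> x; apply/funext=> y.
  change ((dlen R j)^-1 * ix i (dyad j k) (fadd F G) x y =
    (dlen R j)^-1 * ix i (dyad j k) F x y + (dlen R j)^-1 * ix i (dyad j k) G x y).
  by rewrite ix_add // mulrDr.
move=> c F gF; apply/funext=> x; apply/funext=> y.
change ((dlen R j)^-1 * ix i (dyad j k) (fscale c F) x y =
    c * ((dlen R j)^-1 * ix i (dyad j k) F x y)).
by rewrite ix_scale // mulrCA.
Qed.

Lemma lin_avgy i j k : lin (@good R m n) (@avgy R m n i j k).
Proof.
split; first by move=> F gF; exact: good_scale (good_iy i j k gF).
split.
  move=> F G gF gG; apply/funext=> x; apply/funext=> y.
  change ((dlen R j)^-1 * iy i (dyad j k) (fadd F G) x y =
    (dlen R j)^-1 * iy i (dyad j k) F x y + (dlen R j)^-1 * iy i (dyad j k) G x y).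
  by rewrite iy_add // mulrDr.
move=> c F gF; apply/funext=> x; apply/funext=> y.
change ((dlen R j)^-1 * iy i (dyad j k) (fscale c F) x y =
    c * ((dlen R j)^-1 * iy i (dyad j k) F x y)).
by rewrite iy_scale // mulrCA.
Qed.

Lemma lin_haarx i j k : lin (@good R m n) (@haarx R m n i j k).
Proof.
split.
  move=> F gF.
  have -> : haarx i j k F = fscale (dlen R j)^-1
     (fadd (ix i (dyad (j + 1) (2 * k)) F) (fscale (-1) (ix i (dyad (j + 1) (2 * k + 1)) F))).
    by apply/funext=> x; apply/funext=> y; rewrite /fscale /fadd mulN1r.
  by apply: good_scale; apply: good_add; [exact: good_ix|apply: good_scale; exact: good_ix].
split.
  move=> F G gF gG; apply/funext=> x; apply/funext=> y.
  change ((dlen R j)^-1 * (ix i (dyad (j + 1) (2 * k)) (fadd F G) x y -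
                           ix i (dyad (j + 1) (2 * k + 1)) (fadd F G) x y) =
    (dlen R j)^-1 * (ix i (dyad (j + 1) (2 * k)) F x y - ix i (dyad (j + 1) (2 * k + 1)) F x y) +
    (dlen R j)^-1 * (ix i (dyad (j + 1) (2 * k)) G x y - ix i (dyad (j + 1) (2 * k + 1)) G x y)).
  rewrite !ix_add //; ring.
move=> c F gF; apply/funext=> x; apply/funext=> y.
change ((dlen R j)^-1 * (ix i (dyad (j + 1) (2 * k)) (fscale c F) x y -
                         ix i (dyad (j + 1) (2 * k + 1)) (fscale c F) x y) =
  c * ((dlen R j)^-1 * (ix i (dyad (j + 1) (2 * k)) F x y - ix i (dyad (j + 1) (2 * k + 1)) F x y))).
rewrite !ix_scale //; ring.
Qed.

Lemma lin_haary i j k : lin (@good R m n) (@haary R m n i j k).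
Proof.
split.
  move=> F gF.
  have -> : @haary R m n i j k F = fscale (dlen R j)^-1
     (fadd (iy i (dyad (j + 1) (2 * k)) F) (fscale (-1) (iy i (dyad (j + 1) (2 * k + 1)) F))).
    by apply/funext=> x; apply/funext=> y; rewrite /fscale /fadd mulN1r.
  by apply: good_scale; apply: good_add; [exact: good_iy|apply: good_scale; exact: good_iy].
split.
  move=> F G gF gG; apply/funext=> x; apply/funext=> y.
  change ((dlen R j)^-1 * (iy i (dyad (j + 1) (2 * k)) (fadd F G) x y -
                           iy i (dyad (j + 1) (2 * k + 1)) (fadd F G) x y) =
    (dlen R j)^-1 * (iy i (dyad (j + 1) (2 * k)) F x y - iy i (dyad (j + 1) (2 * k + 1)) F x y) +
    (dlen R j)^-1 * (iy i (dyad (j + 1) (2 * k)) G x y - iy i (dyad (j + 1) (2 * k + 1)) G x y)).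
  rewrite !iy_add //; ring.
move=> c F gF; apply/funext=> x; apply/funext=> y.
change ((dlen R j)^-1 * (iy i (dyad (j + 1) (2 * k)) (fscale c F) x y -
                         iy i (dyad (j + 1) (2 * k + 1)) (fscale c F) x y) =
  c * ((dlen R j)^-1 * (iy i (dyad (j + 1) (2 * k)) F x y - iy i (dyad (j + 1) (2 * k + 1)) F x y))).
rewrite !iy_scale //; ring.
Qed.

Lemma splitLx (i : 'I_m) j k (F : Fn) : good F ->
  avgx i (j + 1) (2 * k) F = gadd (avgx i j k F) (gscale 1 (haarx i j k F)).
Proof.
move=> gF; apply/funext=> x; apply/funext=> y.
change ((dlen R (j + 1))^-1 * ix i (dyad (j + 1) (2 * k)) F x y =
  (dlen R j)^-1 * ix i (dyad j k) F x y +
  1 * ((dlen R j)^-1 * (ix i (dyad (j + 1) (2 * k)) F x y - ix i (dyad (j + 1) (2 * k + 1)) F x y))).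
rewrite (ix_split i j k) // (dlenS R j); field; rewrite ?mulf_neq0 ?dlen_neq0 ?pnatr_eq0 //.
Qed.

Lemma splitRx (i : 'I_m) j k (F : Fn) : good F ->
  avgx i (j + 1) (2 * k + 1) F = gadd (avgx i j k F) (gscale (-1) (haarx i j k F)).
Proof.
move=> gF; apply/funext=> x; apply/funext=> y.
change ((dlen R (j + 1))^-1 * ix i (dyad (j + 1) (2 * k + 1)) F x y =
  (dlen R j)^-1 * ix i (dyad j k) F x y +
  (-1) * ((dlen R j)^-1 * (ix i (dyad (j + 1) (2 * k)) F x y - ix i (dyad (j + 1) (2 * k + 1)) F x y))).
rewrite (ix_split i j k) // (dlenS R j); field; rewrite ?mulf_neq0 ?dlen_neq0 ?pnatr_eq0 //.
Qed.

Lemma splitLy (i : 'I_n) j k (F : Fn) : good F ->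
  avgy i (j + 1) (2 * k) F = gadd (avgy i j k F) (gscale 1 (haary i j k F)).
Proof.
move=> gF; apply/funext=> x; apply/funext=> y.
change ((dlen R (j + 1))^-1 * iy i (dyad (j + 1) (2 * k)) F x y =
  (dlen R j)^-1 * iy i (dyad j k) F x y +
  1 * ((dlen R j)^-1 * (iy i (dyad (j + 1) (2 * k)) F x y - iy i (dyad (j + 1) (2 * k + 1)) F x y))).
rewrite (iy_split i j k) // (dlenS R j); field; rewrite ?mulf_neq0 ?dlen_neq0 ?pnatr_eq0 //.
Qed.

Lemma splitRy (i : 'I_n) j k (F : Fn) : good F ->
  avgy i (j + 1) (2 * k + 1) F = gadd (avgy i j k F) (gscale (-1) (haary i j k F)).
Proof.
move=> gF; apply/funext=> x; apply/funext=> y.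
change ((dlen R (j + 1))^-1 * iy i (dyad (j + 1) (2 * k + 1)) F x y =
  (dlen R j)^-1 * iy i (dyad j k) F x y +
  (-1) * ((dlen R j)^-1 * (iy i (dyad (j + 1) (2 * k)) F x y - iy i (dyad (j + 1) (2 * k + 1)) F x y))).
rewrite (iy_split i j k) // (dlenS R j); field; rewrite ?mulf_neq0 ?dlen_neq0 ?pnatr_eq0 //.
Qed.

End Ops2.

Lemma sub_enum (I : finType) (S : {set I}) : S \subset enum I.
Proof. by apply/fintype.subsetP => i _; rewrite mem_enum. Qed.

Lemma foldr_set0 (T : Type) (I : finType) (f g : I -> T -> T) (F : T) s :
  foldr (fun i G => if i \in finset.set0 then f i G else g i G) F s =
  foldr (fun i G => g i G) F s.
Proof. by elim: s => [|i s IH] //=; rewrite inE IH. Qed.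

Section Quad.
Variables (R : realType) (m n : nat).
Notation Fn := (('I_m -> R) -> ('I_n -> R) -> R).
Variables (j kI kJ : int) (Phi : Fn) (gPhi : good Phi).

Lemma quad (lx : 'I_m -> Fn -> Fn) (ly : 'I_n -> Fn -> Fn) (sa sb : R) :
  (forall i G, good G -> lx i G = gadd (avgx i j kI G) (gscale sa (haarx i j kI G))) ->
  (forall i G, good G -> ly i G = gadd (avgy i j kJ G) (gscale sb (haary i j kJ G))) ->
  foldr (fun i G => ly i G) (foldr (fun i G => lx i G) Phi (enum 'I_m)) (enum 'I_n)
     (fun _ => 0) (fun _ => 0) =
  \sum_(T : {set 'I_n}) sb ^+ #|T| * \sum_(S : {set 'I_m}) sa ^+ #|S| *
      mixed S T j kI j kJ Phi.
Proof.
move=> hlx hly.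
have gD := @good_add R m n; have gZ := @good_scale R m n; have g0 := @good0 R m n.
have hax := fun i => @lin_avgx R m n i j kI.
have hhx := fun i => @lin_haarx R m n i j kI.
have hay := fun i => @lin_avgy R m n i j kJ.
have hhy := fun i => @lin_haary R m n i j kJ.
rewrite (foldr_l gD gZ hax hhx hlx _ gPhi).
rewrite (expandE gD gZ g0 hax hhx sa (enum_uniq _) gPhi).
set GX := gsum _ _ _ _.
have gGX : good GX by apply: (gsum_good gD gZ g0) => S; exact: (Op_good hax hhx).
rewrite (foldr_l gD gZ hay hhy hly _ gGX).
rewrite (expandE gD gZ g0 hay hhy sb (enum_uniq _) gGX).
rewrite /gsum /=.
apply: eq_big => [T|T _]; first by rewrite sub_enum.
congr (_ * _).
rewrite /GX (lin_sum gD gZ g0 _ _ _ (Op_lin hay hhy T (enum 'I_n))); last first.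
  by move=> S; exact: (Op_good hax hhx).
rewrite /gsum; apply: eq_big => [S|S _]; first by rewrite sub_enum.
by [].
Qed.

End Quad.

Lemma comb (R : realType) (I J : finType) (M : {set I} -> {set J} -> R) :
  let E (sa sb : R) := \sum_(T : {set J}) sb ^+ #|T| * \sum_(S : {set I}) sa ^+ #|S| * M S T in
  4^-1 * (E 1 1 + E 1 (-1) + E (-1) 1 + E (-1) (-1)) - M finset.set0 finset.set0 =
  \sum_(S : {set I} | ~~ odd #|S|)
    \sum_(T : {set J} | ~~ odd #|T| && ((S != finset.set0) || (T != finset.set0))) M S T.
Proof.
move=> E.
have h1 : forall sa sb, E sa sb = \sum_(S : {set I}) \sum_(T : {set J}) sa ^+ #|S| * sb ^+ #|T| * M S T.
  move=> sa sb; rewrite /E exchange_big /=; apply: eq_bigr => T _.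
  rewrite mulr_sumr; apply: eq_bigr => S _; ring.
have h2 : forall (f g h k : {set I} -> {set J} -> R),
  (\sum_(S : {set I}) \sum_(T : {set J}) f S T) + (\sum_(S : {set I}) \sum_(T : {set J}) g S T) +
  (\sum_(S : {set I}) \sum_(T : {set J}) h S T) + (\sum_(S : {set I}) \sum_(T : {set J}) k S T) =
  \sum_(S : {set I}) \sum_(T : {set J}) (f S T + g S T + h S T + k S T).
  move=> f g h k; rewrite -!big_split; apply: eq_bigr => S _; by rewrite -!big_split.
rewrite !h1 h2 mulr_sumr.
have key : forall (S : {set I}) (T : {set J}),
  4^-1 * ((1 ^+ #|S| * 1 ^+ #|T| * M S T) + (1 ^+ #|S| * (-1) ^+ #|T| * M S T) +
          ((-1) ^+ #|S| * 1 ^+ #|T| * M S T) + ((-1) ^+ #|S| * (-1) ^+ #|T| * M S T)) =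
  (if ~~ odd #|S| && ~~ odd #|T| && ((S != finset.set0) || (T != finset.set0)) then M S T else 0)
  + (if (S == finset.set0) && (T == finset.set0) then M S T else 0).
  move=> S T; rewrite !expr1n.
  rewrite -[(-1) ^+ #|S|]signr_odd -[(-1) ^+ #|T|]signr_odd.
  case: (eqVneq S finset.set0) => [->|nS]; case: (eqVneq T finset.set0) => [->|nT];
    rewrite ?cards0 /= ?expr0 ?orbT ?orbF ?andbF ?andbT.
  - lra.
  - by case: (odd #|T|); rewrite /= ?expr0 ?expr1; lra.
  - by case: (odd #|S|); rewrite /= ?expr0 ?expr1; lra.
  - by case: (odd #|S|); case: (odd #|T|); rewrite /= ?expr0 ?expr1; lra.
under eq_bigr => S _ do rewrite mulr_sumr.
under eq_bigr => S _ do under eq_bigr => T _ do rewrite key.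
have -> : \sum_(S : {set I}) \sum_(T : {set J})
    ((if ~~ odd #|S| && ~~ odd #|T| && ((S != finset.set0) || (T != finset.set0)) then M S T else 0)
  + (if (S == finset.set0) && (T == finset.set0) then M S T else 0)) =
  \sum_(S : {set I}) \sum_(T : {set J})
    (if ~~ odd #|S| && ~~ odd #|T| && ((S != finset.set0) || (T != finset.set0)) then M S T else 0)
  + M finset.set0 finset.set0.
  rewrite -[X in _ = _ + X](_ : \sum_(S : {set I}) (if S == finset.set0 then
        \sum_(T : {set J}) (if T == finset.set0 then M S T else 0) else 0) = _); last first.
    rewrite -big_mkcond big_pred1_eq -big_mkcond big_pred1_eq //.
  rewrite -big_split /=; apply: eq_bigr => S _.
  case: (S == finset.set0); last by rewrite addr0 /=; apply: eq_bigr => T _; rewrite /= ?andFb addr0.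
  by rewrite -big_split /=.
rewrite addrK [RHS]big_mkcond /=; apply: eq_bigr => S _.
case: (odd #|S|) => /=; first by rewrite big1.
by rewrite [RHS]big_mkcond.
Qed.


End Helpers.
Import Helpers.

Theorem theorem2 (R : realType) (m n : nat) (j kI kJ : int)
  (Phi : ('I_m -> R) -> ('I_n -> R) -> R) :
  borel_measurable Phi -> bounded_fun2 Phi ->
  BoxB Phi j kI kJ =
  \sum_(S : {set 'I_m} | ~~ odd #|S|)
    \sum_(T : {set 'I_n} | ~~ odd #|T| && ((S != finset.set0) || (T != finset.set0)))
      mixed S T j kI j kJ Phi.
Proof.
move=> mP bP; have gP : good Phi := conj mP bP.
have e := @comb R _ _ (fun S T => mixed S T j kI j kJ Phi); rewrite /= in e.
rewrite -e /BoxB.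
have -> : Bsq Phi j kI kJ = mixed finset.set0 finset.set0 j kI j kJ Phi by [].
congr (_ * _ - _).
rewrite /Bsq /mixed /= !foldr_set0.
rewrite (quad gP (fun i G gG => splitLx i j kI gG) (fun i G gG => splitLy i j kJ gG)).
rewrite (quad gP (fun i G gG => splitLx i j kI gG) (fun i G gG => splitRy i j kJ gG)).
rewrite (quad gP (fun i G gG => splitRx i j kI gG) (fun i G gG => splitLy i j kJ gG)).
by rewrite (quad gP (fun i G gG => splitRx i j kI gG) (fun i G gG => splitRy i j kJ gG)).
Qed.
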